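(* Let $\mathcal{A},\mathcal{B}$ be Hilbert spaces with $\dim\mathcal{A}=m$, $\dim\mathcal{B}=n$, $2\le m\le n$, with computational bases $\{|j\rangle\}$. Let $S=\operatorname{span}\{|j\rangle|k+1\rangle-|j+1\rangle|k\rangle : 0\le j\le m-2,\ 0\le k\le n-2\}\subseteq\mathcal{A}\otimes\mathcal{B}$. Then the orthogonal complement $S^\perp$ is strongly PPT-unextendible.
   Context: A bipartite positive semidefinite operator $E$ is PPT if its partial transpose $E^{T_B}$ (defined by $(|i\rangle\langle k|\otimes|j\rangle\langle l|)^{T_B}=|i\rangle\langle k|\otimes|l\rangle\langle j|$) is positive semidefinite. A subspace $V\subseteq\mathcal{A}\otimes\mathcal{B}$ is PPT-extendible if there exists a nonzero PPT operator whose support is contained in $V^\perp$; $V$ is strongly PPT-unextendible if for every positive integer $k$, $V^{\otimes k}\subseteq\mathcal{A}^{\otimes k}\otimes\mathcal{B}^{\otimes k}$ is not PPT-extendible (with respect to the bipartition $\mathcal{A}^{\otimes k}:\mathcal{B}^{\otimes k}$). *)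

(* Defs.v *)
(* Finite-dimensional complex Hilbert spaces are modelled as
   functions  I -> C  on a finite index type I (the computational basis),
   operators as kernels  I -> I -> C  (matrix entries <s|E|t> = E s t),
   over an arbitrary numClosedFieldType C (e.g. algC, complex numbers). *)
From HB Require Import structures.
From mathcomp Require Import all_boot all_order all_algebra.
Set Implicit Arguments. Unset Strict Implicit. Unset Printing Implicit Defensive.
Import Order.TTheory GRing.Theory Num.Theory.
Local Open Scope ring_scope.

Section QInfo.
Variable C : numClosedFieldType.

Definition inner (I : finType) (x y : I -> C) : C := \sum_t (x t)^* * y t.

Definition apply_op (I : finType) (E : I -> I -> C) (v : I -> C) : I -> C :=
  fun s => \sum_t E s t * v t.

Definition psd (I : finType) (E : I -> I -> C) : Prop :=
  (forall s t, E s t = (E t s)^*) /\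
  (forall v : I -> C, 0 <= \sum_s \sum_t (v s)^* * E s t * v t).

(* Partial transpose on the second factor:
   (|i><k| (x) |j><l|)^{T_B} = |i><k| (x) |l><j|, i.e.
   E^{T_B}[(a,b),(a',b')] = E[(a,b'),(a',b)]. *)
Definition ptransB (IA IB : finType) (E : (IA * IB) -> (IA * IB) -> C) :
  (IA * IB) -> (IA * IB) -> C :=
  fun x y => E (x.1, y.2) (y.1, x.2).

Definition PPT (IA IB : finType) (E : (IA * IB) -> (IA * IB) -> C) : Prop :=
  psd E /\ psd (ptransB E).

Definition span (I : finType) (P : (I -> C) -> Prop) (w : I -> C) : Prop :=
  exists (r : nat) (c : 'I_r -> C) (g : 'I_r -> (I -> C)),
    (forall i, P (g i)) /\
    w = (fun t => \sum_(i < r) c i * g i t).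

Definition orth (I : finType) (P : (I -> C) -> Prop) (v : I -> C) : Prop :=
  forall w, P w -> inner w v = 0.

Definition supp_in_orth (I : finType) (E : I -> I -> C) (V : (I -> C) -> Prop)
  : Prop := forall u, orth V (apply_op E u).

Definition PPT_extendible (IA IB : finType) (V : (IA * IB -> C) -> Prop) : Prop :=
  exists E : (IA * IB) -> (IA * IB) -> C,
    E <> (fun _ _ => 0) /\ PPT E /\ supp_in_orth E V.

(* Tensor product v_1 (x) ... (x) v_k of vectors in A (x) B, viewed as a
   vector of A^{(x)k} (x) B^{(x)k} (factors regrouped for the bipartition
   A^{(x)k} : B^{(x)k}). *)
Definition tensorvec (IA IB : finType) (k : nat) (vs : 'I_k -> (IA * IB -> C)) :
  {ffun 'I_k -> IA} * {ffun 'I_k -> IB} -> C :=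
  fun ab => \prod_(i < k) vs i (ab.1 i, ab.2 i).

Definition tensor_pow (IA IB : finType) (k : nat) (V : (IA * IB -> C) -> Prop) :
  ({ffun 'I_k -> IA} * {ffun 'I_k -> IB} -> C) -> Prop :=
  span (fun w => exists vs : 'I_k -> (IA * IB -> C),
                   (forall i, V (vs i)) /\ w = tensorvec vs).

Definition strongly_PPT_unextendible (IA IB : finType)
  (V : (IA * IB -> C) -> Prop) : Prop :=
  forall k : nat, (0 < k)%N -> ~ PPT_extendible (@tensor_pow IA IB k V).

Definition Sgen (m n : nat) (j k : nat) : 'I_m * 'I_n -> C :=
  fun ab => ((((ab.1 : nat) == j) && ((ab.2 : nat) == k.+1))%:R
            - (((ab.1 : nat) == j.+1) && ((ab.2 : nat) == k)) %:R).

Definition Sspace (m n : nat) : ('I_m * 'I_n -> C) -> Prop :=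
  span (fun w => exists j k, (j.+1 < m)%N /\ (k.+1 < n)%N /\ w = @Sgen m n j k).

End QInfo.

(* Main.v *)
Require Import Defs.
From mathcomp Require Import all_boot all_order all_algebra.
From mathcomp Require Import ring zify.
From Stdlib Require Import FunctionalExtensionality.
Set Implicit Arguments. Unset Strict Implicit. Unset Printing Implicit Defensive.
Import Order.TTheory GRing.Theory Num.Theory.

Section Aux.
Local Open Scope ring_scope.
Variable C : numClosedFieldType.

Lemma sum_ind (T : finType) (P : pred T) (p : T) (G : T -> C) :
  (forall t, P t = (t == p)) -> \sum_t (P t)%:R * G t = G p.
Proof.
move=> HP; rewrite (bigD1 p) //= HP eqxx mul1r big1 ?addr0 // => t /negbTE.
by rewrite HP => ->; rewrite mul0r.
Qed.

Lemma sum_delta (T : finType) (p : T) (G : T -> C) :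
  \sum_t (t == p)%:R * G t = G p.
Proof. exact: sum_ind. Qed.

Lemma qform2 (T : finType) (F : T -> T -> C) x y (al be : C) :
  \sum_s \sum_t (((s == x)%:R * al + (s == y)%:R * be)^* * F s t *
                 ((t == x)%:R * al + (t == y)%:R * be)) =
  al^* * al * F x x + al^* * be * F x y + be^* * al * F y x + be^* * be * F y y.
Proof.
have Hin : forall s, \sum_t (((s == x)%:R * al + (s == y)%:R * be)^* * F s t *
                 ((t == x)%:R * al + (t == y)%:R * be)) =
   ((s == x)%:R * al + (s == y)%:R * be)^* * (F s x * al + F s y * be).
  move=> s; rewrite (eq_bigr (fun t => ((s == x)%:R * al + (s == y)%:R * be)^* *
     ((t == x)%:R * (F s t * al) + (t == y)%:R * (F s t * be)))); last first.
    by move=> t _; rewrite -mulrA; congr (_ * _); rewrite mulrDr; congr (_ + _); exact: mulrCA.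
  by rewrite -mulr_sumr big_split /= !sum_delta.
rewrite (eq_bigr _ (fun s _ => Hin s)).
rewrite (eq_bigr (fun s => (s == x)%:R * (al^* * (F s x * al + F s y * be)) +
    (s == y)%:R * (be^* * (F s x * al + F s y * be)))); last first.
  by move=> s _; rewrite rmorphD !rmorphM /= !conjC_nat mulrDl !mulrA.
rewrite big_split /= !sum_delta.
ring.
Qed.

Lemma psd_row0 (T : finType) (F : T -> T -> C) x y :
  psd F -> F x x = 0 -> F x y = 0.
Proof.
move=> [herm pos] Fxx; case: (eqVneq (F x y) 0) => // pnz; exfalso.
have Fyy : 0 <= F y y.
  have := pos (fun s => (s == x)%:R * 0 + (s == y)%:R * 1).
  by rewrite qform2 conjC0 conjC1 !(mul0r, mul1r, add0r).
set p := F x y in pnz *.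
have Fyx : F y x = p^* by rewrite herm.
set N := p * p^*.
have Npos : 0 < N by rewrite mul_conjC_gt0.
have := pos (fun s => (s == x)%:R * (- (F y y + 1) * p) + (s == y)%:R * N).
rewrite qform2 Fxx Fyx.
have -> : (- (F y y + 1) * p)^* = - (F y y + 1) * p^*.
  by rewrite rmorphM rmorphN rmorphD /= conjC1 geC0_conj.
have -> : N^* = N by rewrite /N rmorphM /= conjCK mulrC.
have -> : (- (F y y + 1) * p^*) * (- (F y y + 1) * p) * 0 +
   (- (F y y + 1) * p^*) * N * p + N * (- (F y y + 1) * p) * p^* + N * N * F y y
   = - (N * N * (F y y + 2)).
  rewrite /N; ring.
rewrite oppr_ge0 lt_geF //.
apply: mulr_gt0; first exact: mulr_gt0.
by apply: (lt_le_trans (ltr0n _ 2)); rewrite lerDr.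
Qed.

End Aux.

Lemma base_inj (N k : nat) (c c' : 'I_k -> nat) :
  (forall i, c i < N)%N -> (forall i, c' i < N)%N ->
  (\sum_(i < k) c i * N ^ i = \sum_(i < k) c' i * N ^ i)%N ->
  forall i, c i = c' i.
Proof.
elim: k c c' => [|k IH] c c' hc hc' e i; first by case: i.
move: e; rewrite !big_ord_recl /= !expn0 !muln1.
rewrite (eq_bigr (fun j => N * (c (lift ord0 j) * N ^ j))%N); last first.
  by move=> j _; rewrite /= expnS mulnCA.
rewrite [X in (_ = _ + X)%N](eq_bigr (fun j => N * (c' (lift ord0 j) * N ^ j))%N);
  last by move=> j _; rewrite /= expnS mulnCA.
rewrite -!big_distrr /= => e.
have e0 : c ord0 = c' ord0.
  have := congr1 (fun z => z %% N)%N e.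
  by rewrite /= ![(c _ + _)%N]addnC ![(c' _ + _)%N]addnC !(mulnC N) !modnMDl !modn_small.
move: e; rewrite e0 => /addnI /eqP; rewrite eqn_pmul2l; last first.
  by apply: leq_ltn_trans (hc ord0).
move/eqP=> e.
case: (unliftP ord0 i) => [j ->|->] //.
by apply: (IH (fun j => c (lift ord0 j)) (fun j => c' (lift ord0 j))).
Qed.

Local Open Scope ring_scope.

Definition hv (C : numClosedFieldType) (m n : nat) (d : nat) : 'I_m * 'I_n -> C :=
  fun ab => (((ab.1 : nat) + ab.2)%N == d)%:R.

Lemma h_orth (C : numClosedFieldType) (m n d : nat) : orth (@Sspace C m n) (@hv C m n d).
Proof.
move=> w [r [c [g [Hg ->]]]]; rewrite /inner.
rewrite (eq_bigr (fun t => \sum_(i < r) (c i)^* * ((g i t)^* * @hv C m n d t))); last first.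
  by move=> t _; rewrite rmorph_sum mulr_suml; apply: eq_bigr => i _; rewrite rmorphM mulrA.
rewrite exchange_big big1 // => i _; rewrite -mulr_sumr.
have [j [l [hj [hl ->]]]] := Hg i.
rewrite (eq_bigr (fun t : 'I_m * 'I_n => ((((t.1 : nat) == j) && ((t.2 : nat) == l.+1))%:R * @hv C m n d t)
   - ((((t.1 : nat) == j.+1) && ((t.2 : nat) == l))%:R * @hv C m n d t))); last first.
  by move=> t _; rewrite /Sgen rmorphB /= !conjC_nat mulrBl.
rewrite sumrB (@sum_ind _ _ _ (Ordinal (ltnW hj), Ordinal hl)); last first.
  by case=> a b; rewrite /= xpair_eqE.
rewrite (@sum_ind _ _ _ (Ordinal hj, Ordinal (ltnW hl))); last first.
  by case=> a b; rewrite /= xpair_eqE.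
by rewrite /hv /= addnS addSn subrr mulr0.
Qed.

Theorem theorem3 (C : numClosedFieldType) (m n : nat) :
  (2 <= m)%N -> (m <= n)%N ->
  strongly_PPT_unextendible (orth (@Sspace C m n)).
Proof.
move=> _ _ k _ [E [Enz [[psdE psdP] Hs]]].
have lev : forall (d : 'I_k -> nat) y,
  \sum_(s : {ffun 'I_k -> 'I_m} * {ffun 'I_k -> 'I_n}) (\prod_(i < k) ((((s.1 i : nat) + s.2 i)%N == d i)%:R : C)) * E s y = 0.
  move=> d y.
  pose w := tensorvec (fun i : 'I_k => @hv C m n (d i)).
  have Hw : @tensor_pow C _ _ k (orth (@Sspace C m n)) w.
    exists 1%N, (fun _ => 1), (fun _ => w); split.
      by move=> _; exists (fun i => @hv C m n (d i)); split => // i; exact: h_orth.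
    by apply: functional_extensionality => t; rewrite big_ord1 mul1r.
  have := Hs (fun t => (t == y)%:R) w Hw; rewrite /inner /apply_op => HH; rewrite -[X in _ = X]HH.
  apply: eq_bigr => s _; congr (_ * _).
    by rewrite /w /tensorvec rmorph_prod; apply: eq_bigr => i _; rewrite /hv /= geC0_conj ?ler0n.
  rewrite [RHS](bigD1 y) //= eqxx mulr1 big1 ?addr0 // => t /negbTE ->; by rewrite mulr0.
pose N := (m + n)%N.
pose F (c : 'I_k -> nat) := (\sum_(i < k) c i * N ^ i)%N.
pose phi (x : {ffun 'I_k -> 'I_m} * {ffun 'I_k -> 'I_n}) :=
  (F (fun i => x.1 i : nat) + F (fun i => x.2 i : nat))%N.
have diag : forall x, E x x = 0.
  suff H : forall p x, (phi x < p)%N -> E x x = 0 by move=> x; exact: (H (phi x).+1).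
  elim=> [//|p IH] [a b] hx.
  have IH' : forall z, (phi z < phi (a, b))%N -> E z z = 0.
    by move=> z hz; apply: IH; lia.
  have := lev (fun i => (a i : nat) + b i)%N (a, b).
  rewrite (bigD1 (a, b)) //= big1 ?mul1r; last by move=> i _; rewrite eqxx.
  rewrite big1 ?addr0 // => -[a' b'] /= hne.
  case: (boolP [forall i, ((a' i : nat) + b' i)%N == (a i + b i)%N]) => hall; last first.
    by move/forallPn: hall => [i hi]; rewrite (bigD1 i) //= (negbTE hi) !mul0r.
  rewrite big1 ?mul1r; last by move=> i _; rewrite (forallP hall).
  have lv : forall i, ((a' i : nat) + b' i)%N = (a i + b i)%N.
    by move=> i; apply/eqP; exact: (forallP hall i).
  have Fs : (F (fun i => a' i : nat) + F (fun i => b' i : nat) =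
             F (fun i => a i : nat) + F (fun i => b i : nat))%N.
    by rewrite /F -!big_split; apply: eq_bigr => i _; rewrite /= -!mulnDl lv.
  have Pe : E (a', b') (a, b) = ptransB E (a', b) (a, b') by [].
  case: (ltnP (phi (a', b)) (phi (a, b))) => h1.
    rewrite Pe; apply: psd_row0 psdP _; rewrite /ptransB /=; exact: IH' h1.
  case: (ltnP (phi (a, b')) (phi (a, b))) => h2.
    rewrite Pe psdP.1 (@psd_row0 _ _ _ (a, b') (a', b) psdP) ?conjC0 //.
    exact: IH' h2.
  exfalso; move: h1 h2; rewrite /phi /= => h1 h2.
  have Fa : F (fun i => a' i : nat) = F (fun i => a i : nat) by lia.
  have bnd : forall (c : 'I_k -> 'I_m) i, (c i < N)%N.
    by move=> c i; apply: leq_trans (ltn_ord _) (leq_addr _ _).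
  have ea := base_inj (bnd a') (bnd a) Fa.
  move/negP: hne; apply; rewrite xpair_eqE; apply/andP; split; apply/eqP/ffunP => i;
    apply: val_inj => //=.
  by have := lv i; rewrite ea => /addnI.
apply: Enz; apply: functional_extensionality => x; apply: functional_extensionality => y.
exact: psd_row0 psdE (diag x).
Qed.
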